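(* For every $b\in\mathbb R$, $$\lim_{z\to\infty}e^{-z}z^{b+1}\sum_{k=1}^\infty\frac{z^{k-1}}{k!\,k^b}=1.$$ Moreover, if $b\ge-1$, then $$\sup_{z\ge0}\ e^{-z}z^{b+1}\sum_{k=1}^\infty\frac{z^{k-1}}{k!\,k^b}<\infty.$$ *)

(* Defs.v *)
From Stdlib Require Import Reals Arith.
Open Scope R_scope.

(* n-th term (n = k-1, k >= 1) of the series  sum_{k>=1} z^(k-1) / (k! * k^b). *)
Definition sterm (b z : R) (n : nat) : R :=
  z ^ n / (INR (fact (S n)) * Rpower (INR (S n)) b).

Definition Fval (b z l : R) : R := exp (- z) * Rpower z (b + 1) * l.

(* Main.v *)
Require Import Defs.
From Stdlib Require Import Reals Lra Lia Arith ZArith.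
From Coquelicot Require Import Coquelicot.
Open Scope R_scope.

Lemma exp_tan x y : exp x * (1 + (y - x)) <= exp y.
Proof.
  replace y with (x + (y - x)) at 2 by ring. rewrite exp_plus.
  apply Rmult_le_compat_l. left; apply exp_pos. apply exp_ineq1_le.
Qed.

Lemma ln_le_xm1 t : 0 < t -> ln t <= t - 1.
Proof. intros. pose proof (exp_ineq1_le (ln t)). rewrite exp_ln in H0; lra. Qed.

Lemma ln_ge t : 0 < t -> 1 - / t <= ln t.
Proof.
  intros. pose proof (ln_le_xm1 (/ t) (Rinv_0_lt_compat _ H)).
  rewrite ln_Rinv in H0 by lra. lra.
Qed.

Lemma Rpower_conv t a u v : 0 < t -> u < v -> u <= a <= v ->
  (v - u) * Rpower t a <= (v - a) * Rpower t u + (a - u) * Rpower t v.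
Proof.
  intros Ht Huv Ha. unfold Rpower.
  pose proof (exp_tan (a * ln t) (u * ln t)).
  pose proof (exp_tan (a * ln t) (v * ln t)).
  pose proof (exp_pos (a * ln t)).
  apply Rmult_le_compat_l with (r := v - a) in H; [|lra].
  apply Rmult_le_compat_l with (r := a - u) in H0; [|lra].
  nra.
Qed.

Lemma Rpower_low t a : 0 < t -> t * (1 + (a - 1) * ln t) <= Rpower t a.
Proof.
  intros Ht. unfold Rpower. pose proof (exp_tan (1 * ln t) (a * ln t)).
  rewrite Rmult_1_l, exp_ln in H by lra. nra.
Qed.

Lemma pow_ineq y e n : 0 <= y -> 0 <= e ->
  (y + e) ^ (S n) <= y ^ (S n) + INR (S n) * e * (y + e) ^ n.
Proof.
  intros Hy He. induction n.
  - simpl. lra.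
  - change ((y+e)^(S (S n))) with ((y+e)*(y+e)^(S n)).
    change (y^(S (S n))) with (y*y^(S n)).
    rewrite S_INR. change ((y+e)^(S n)) with ((y+e)*(y+e)^n) at 2.
    change ((y+e)^(S n)) with ((y+e)*(y+e)^n) in IHn.
    pose proof (pow_le (y+e) n ltac:(lra)).
    pose proof (pos_INR (S n)).
    assert (0 <= y ^ S n) by (apply pow_le; lra).
    set (P := (y+e)^n) in *. set (Q := y ^ S n) in *. set (k := INR (S n)) in *.
    assert (y * ((y+e)*P) <= y * (Q + k*e*P)) by (apply Rmult_le_compat_l; lra).
    assert (k*e*y*P <= k*e*(y+e)*P).
    { apply Rmult_le_compat_r; auto. apply Rmult_le_compat_l. apply Rmult_le_pos; lra. lra. }
    change ((y+e)^(S n)) with ((y+e)*P). nra.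
Qed.

Lemma isum_partial_le f l N : infinite_sum f l -> (forall n, 0 <= f n) -> sum_f_R0 f N <= l.
Proof.
  intros H Hf. destruct (Rle_dec (sum_f_R0 f N) l) as [|Hn]; auto.
  exfalso. destruct (H (sum_f_R0 f N - l)) as [M HM]; [lra|].
  specialize (HM (max M N) (Nat.le_max_l _ _)).
  assert (sum_f_R0 f N <= sum_f_R0 f (max M N)).
  { assert (forall k, sum_f_R0 f N <= sum_f_R0 f (N + k)).
    { induction k. rewrite Nat.add_0_r; lra. rewrite Nat.add_succ_r. simpl. pose proof (Hf (S (N+k))). lra. }
    replace (max M N) with (N + (max M N - N))%nat by lia. apply H0. }
  unfold R_dist in HM. rewrite Rabs_right in HM; lra.
Qed.

Lemma isum_le_bound f l B : infinite_sum f l -> (forall N, sum_f_R0 f N <= B) -> l <= B.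
Proof.
  intros H Hb. destruct (Rle_dec l B) as [|Hn]; auto. exfalso.
  destruct (H (l - B)) as [M HM]; [lra|]. specialize (HM M (le_n _)). specialize (Hb M).
  unfold R_dist in HM. rewrite Rabs_left1 in HM; lra.
Qed.

Lemma isum_ge_lim g s L al be : infinite_sum g s -> 0 <= al ->
  (forall N, al * sum_f_R0 g N + be <= L) -> al * s + be <= L.
Proof.
  intros H Hal Hb. destruct (Rle_dec (al * s + be) L) as [|Hn]; auto. exfalso.
  destruct (Req_dec al 0). subst. specialize (Hb O). lra.
  destruct (H ((al * s + be - L)/al)) as [M HM].
  apply Rdiv_lt_0_compat; lra.
  specialize (HM M (le_n _)). specialize (Hb M). unfold R_dist in HM.
  apply Rabs_def2 in HM. destruct HM.
  assert (al * (s - sum_f_R0 g M) < al * ((al * s + be - L) / al)) by (apply Rmult_lt_compat_l; lra).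
  field_simplify in H3; [|lra]. nra.
Qed.

Lemma sum_shift_le f g N : f O <= 0 -> (forall k, f (S k) <= g k) -> (forall k, 0 <= g k) ->
  sum_f_R0 f N <= sum_f_R0 g N.
Proof.
  intros H0 H1 H2. assert (sum_f_R0 f N + g N <= sum_f_R0 g N).
  { induction N; simpl. lra. specialize (H1 N). specialize (H2 (S N)). lra. }
  specialize (H2 N). lra.
Qed.

Lemma term_le_sum f N : (forall n, 0 <= f n) -> f N <= sum_f_R0 f N.
Proof. intros H. destruct N; simpl. lra. pose proof (cond_pos_sum f N H). lra. Qed.

Definition p (z : R) (k : nat) : R := exp (- z) * (/ INR (fact k) * z ^ k).
Definition w (z : R) (k : nat) : R := p z (S k).
Definition t (z : R) (k : nat) : R := INR (S k) / z.

Lemma fact_pos k : 0 < INR (fact k).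
Proof. apply lt_0_INR. apply lt_O_fact. Qed.

Lemma p_sum z : infinite_sum (p z) 1.
Proof.
  apply is_series_Reals.
  assert (H : is_series (fun i => / INR (fact i) * z ^ i) (exp z)).
  { apply is_series_Reals. exact (proj2_sig (exist_exp z)). }
  apply (is_series_scal_l (exp (- z))) in H.
  replace 1 with (scal (exp (-z)) (exp z)).
  apply (is_series_ext _ _ _ (fun n => eq_refl) H).
  unfold scal; simpl; unfold mult; simpl. rewrite <- exp_plus. replace (-z+z) with 0 by ring. apply exp_0.
Qed.

Lemma p_nonneg z k : 0 <= z -> 0 <= p z k.
Proof.
  intros. unfold p. pose proof (exp_pos (-z)). pose proof (fact_pos k).
  pose proof (pow_le z k H). apply Rmult_le_pos; [lra|]. apply Rmult_le_pos; auto.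
  left; apply Rinv_0_lt_compat; auto.
Qed.

Lemma wt_p z k : 0 < z -> w z k * t z k = p z k.
Proof.
  intros. unfold w, t, p. rewrite fact_simpl, mult_INR. simpl pow.
  pose proof (fact_pos k). pose proof (pos_INR k). rewrite S_INR. field. lra.
Qed.

Lemma t_pos z k : 0 < z -> 0 < t z k.
Proof. intros. unfold t. apply Rdiv_lt_0_compat; auto. apply lt_0_INR; lia. Qed.

Lemma p_sum_le z N : 0 <= z -> sum_f_R0 (p z) N <= 1.
Proof. intros. apply isum_partial_le. apply p_sum. intros; apply p_nonneg; auto. Qed.

Lemma sum_scal_l (c : R) f N : sum_f_R0 (fun k => c * f k) N = c * sum_f_R0 f N.
Proof. rewrite scal_sum. apply sum_eq. intros; ring. Qed.

Definition E z m N := sum_f_R0 (fun k => w z k * t z k ^ m) N.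

Lemma E0 z N : 0 < z -> E z 0 N <= 1.
Proof.
  intros. unfold E. pose proof (p_sum_le z (S N) ltac:(lra)).
  rewrite decomp_sum in H0 by lia. simpl pred in H0. pose proof (p_nonneg z 0 ltac:(lra)).
  unfold w. erewrite sum_eq. 2:{ intros. rewrite pow_O, Rmult_1_r. reflexivity. } lra.
Qed.

Lemma E1 z N : 0 < z -> E z 1 N <= 1.
Proof.
  intros. unfold E. erewrite sum_eq. apply (p_sum_le z N); lra.
  intros. simpl. rewrite Rmult_1_r. apply wt_p; auto.
Qed.

Lemma E_nonneg z m N : 0 < z -> 0 <= E z m N.
Proof.
  intros. unfold E. apply cond_pos_sum. intros. apply Rmult_le_pos. apply p_nonneg; lra.
  apply pow_le. left; apply t_pos; auto.
Qed.

Lemma E_step z j N : 0 < z -> E z (S (S j)) N <= (1 + INR (S j) / z) * E z (S j) N.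
Proof.
  intros Hz. unfold E.
  assert (Hpt : forall k, w z k * t z k ^ S (S j) <=
     p z k * (INR k / z) ^ S j + INR (S j) / z * (w z k * t z k ^ S j)).
  { intros k. replace (w z k * t z k ^ S (S j)) with (p z k * t z k ^ S j)
      by (rewrite <- wt_p; auto; simpl; ring).
    assert (t z k = INR k / z + / z) by (unfold t; rewrite S_INR; field; lra).
    pose proof (pow_ineq (INR k / z) (/ z) j). rewrite <- H in H0.
    assert (0 <= INR k / z) by (apply Rdiv_le_0_compat; [apply pos_INR|lra]).
    assert (0 <= / z) by (left; apply Rinv_0_lt_compat; lra).
    specialize (H0 H1 H2). pose proof (p_nonneg z k ltac:(lra)).
    apply Rmult_le_compat_l with (r := p z k) in H0; auto.
    replace (INR (S j) / z * (w z k * t z k ^ S j)) with (p z k * (INR (S j) * / z * t z k ^ j)).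
    lra. rewrite <- wt_p; auto. simpl. unfold Rdiv. ring. }
  eapply Rle_trans. apply sum_Rle. intros; apply Hpt.
  rewrite plus_sum. rewrite sum_scal_l.
  assert (sum_f_R0 (fun k => p z k * (INR k / z) ^ S j) N <= sum_f_R0 (fun k => w z k * t z k ^ S j) N).
  { apply sum_shift_le.
    - simpl. unfold Rdiv. rewrite Rmult_0_l. lra.
    - intros k. unfold w, t. lra.
    - intros k. apply Rmult_le_pos. apply p_nonneg; lra. apply pow_le. left; apply t_pos; auto. }
  lra.
Qed.

Lemma step_eps eps : 0 < eps -> exists e, 0 < e /\
  (forall d Y, 0 <= d <= e -> 0 <= Y <= 1 + e -> (1 + d) * Y <= 1 + eps) /\
  (forall d X Y, 0 <= d <= e -> X <= Y + d * X -> Y <= 1 + e -> X <= 1 + eps).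
Proof.
  intros He. exists (Rmin eps 1 / 4).
  assert (0 < Rmin eps 1) by (apply Rmin_pos; lra).
  pose proof (Rmin_l eps 1). pose proof (Rmin_r eps 1).
  set (m := Rmin eps 1) in *. split; [lra|split].
  - intros d Y Hd HY. nra.
  - intros d X Y Hd HX HY. destruct (Rle_dec X (1 + eps)); auto. exfalso.
    assert ((1 - d) * X <= Y) by lra. nra.
Qed.

Lemma div_small C e z : 0 < e -> 0 <= C -> 0 < z -> C / e < z -> C / z <= e.
Proof.
  intros. apply Rmult_lt_compat_r with (r := e) in H2; auto.
  unfold Rdiv in *. rewrite Rmult_assoc, Rinv_l, Rmult_1_r in H2 by lra.
  apply Rmult_le_reg_r with z; auto. rewrite Rmult_assoc, Rinv_l by lra. lra.
Qed.

Lemma PA1 : forall j eps, 0 < eps -> exists Z, 0 < Z /\ forall z, Z < z -> forall N, E z (S j) N <= 1 + eps.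
Proof.
  induction j; intros eps Heps.
  - exists 1. split; [lra|]. intros. pose proof (E1 z N ltac:(lra)). lra.
  - destruct (step_eps eps Heps) as (e & He & H1 & _).
    destruct (IHj e He) as (Z' & HZ' & HZ).
    exists (Rmax Z' (INR (S j) / e)). split. { pose proof (Rmax_l Z' (INR (S j)/e)). lra. }
    intros z Hz N. pose proof (Rmax_l Z' (INR (S j)/e)). pose proof (Rmax_r Z' (INR (S j)/e)).
    assert (0 < z) by lra.
    eapply Rle_trans. apply E_step; auto. apply H1.
    + split. apply Rdiv_le_0_compat; [apply pos_INR|lra].
      apply div_small; auto. apply pos_INR. lra.
    + split. apply E_nonneg; auto. apply HZ. lra.
Qed.

Lemma PA m eps : 0 < eps -> exists Z, 0 < Z /\ forall z, Z < z -> forall N, E z m N <= 1 + eps.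
Proof.
  intros. destruct m. exists 1. split; [lra|]. intros. pose proof (E0 z N ltac:(lra)). lra.
  apply PA1; auto.
Qed.

Definition v z m k := w z k * (z / INR (S k)) ^ m.
Definition G z m := Series (v z m).

Lemma w_nonneg z k : 0 <= z -> 0 <= w z k.
Proof. intros; apply p_nonneg; auto. Qed.

Lemma v_nonneg z m k : 0 <= z -> 0 <= v z m k.
Proof.
  intros. unfold v. apply Rmult_le_pos. apply w_nonneg; auto. apply pow_le.
  apply Rdiv_le_0_compat; auto. apply lt_0_INR; lia.
Qed.

Lemma ex_p z : ex_series (p z).
Proof. exists 1. apply is_series_Reals, p_sum. Qed.

Lemma ex_w z : ex_series (w z).
Proof. apply (ex_series_incr_1 (p z)), ex_p. Qed.

Lemma ex_v z m : 0 <= z -> ex_series (v z m).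
Proof.
  intros Hz. apply (@ex_series_le R_AbsRing R_CompleteNormedModule _ (fun k => z ^ m * w z k)).
  - intros n. change (norm (v z m n)) with (Rabs (v z m n)).
    rewrite Rabs_right by (apply Rle_ge, v_nonneg; auto). unfold v.
    rewrite Rmult_comm. apply Rmult_le_compat_r. apply w_nonneg; auto.
    apply pow_incr. split. apply Rdiv_le_0_compat; auto. apply lt_0_INR; lia.
    unfold Rdiv. rewrite <- (Rmult_1_r z) at 2. apply Rmult_le_compat_l; auto.
    rewrite <- Rinv_1. apply Rinv_le_contravar. lra. rewrite S_INR. pose proof (pos_INR n). lra.
  - apply (ex_series_scal_l (z ^ m) (w z)). apply ex_w.
Qed.

Lemma Series_w z : 0 <= z -> Series (w z) <= 1.
Proof. intros Hz.
  pose proof (Series_incr_1 (p z) (ex_p z)).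
  rewrite (is_series_unique _ 1) in H by (apply is_series_Reals, p_sum).
  unfold w. pose proof (p_nonneg z 0 Hz). lra.
Qed.

Lemma G0 z : 0 <= z -> G z 0 <= 1.
Proof.
  intros Hz. unfold G. rewrite (Series_ext _ (w z)). apply Series_w; auto. intros; unfold v; simpl; ring.
Qed.

Lemma w_rec z k : 0 < z -> w z k = w z (S k) * INR (S (S k)) / z.
Proof.
  intros. unfold w, p. rewrite (fact_simpl (S k)), mult_INR. simpl pow.
  pose proof (fact_pos (S k)). pose proof (lt_0_INR (S (S k)) ltac:(lia)). field. lra.
Qed.

Lemma ratio_bound x m : 1 <= x ->
  ((x + 1) / x) ^ S m <= 1 + INR (S m) * 2 ^ S m / (x + 1).
Proof.
  intros Hx. replace ((x+1)/x) with (1 + / x) by (field; lra).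
  assert (0 < / x <= 1). { split. apply Rinv_0_lt_compat; lra. rewrite <- Rinv_1. apply Rinv_le_contravar; lra. }
  pose proof (pow_ineq 1 (/ x) m ltac:(lra) ltac:(lra)). rewrite pow1 in H0.
  assert ((1 + / x) ^ m <= 2 ^ m) by (apply pow_incr; lra).
  assert (/ x <= 2 / (x + 1)). { apply Rmult_le_reg_r with (x * (x+1)). nra. field_simplify; lra. }
  pose proof (pos_INR (S m)). pose proof (pow_le (1 + /x) m ltac:(lra)).
  assert (INR (S m) * / x * (1 + / x) ^ m <= INR (S m) * (2 / (x+1)) * 2 ^ m).
  { apply Rmult_le_compat; try nra; apply Rmult_le_compat_l; lra. }
  simpl pow in H0 |- *. replace (INR (S m) * (2 * 2 ^ m) / (x + 1)) with (INR (S m) * (2 / (x + 1)) * 2 ^ m) by (field; lra).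
  lra.
Qed.

Lemma v_step z m k : 0 < z ->
  v z (S m) k <= v z m (S k) + INR (S m) * 2 ^ S m / z * v z (S m) (S k).
Proof.
  intros Hz. unfold v. rewrite (w_rec z k Hz).
  set (x := INR (S k)). set (y := INR (S (S k))).
  assert (Hy : y = x + 1) by (unfold x, y; rewrite (S_INR (S k)); ring).
  assert (Hx : 1 <= x) by (unfold x; rewrite S_INR; pose proof (pos_INR k); lra).
  set (W := w z (S k)).
  assert (0 <= W) by (apply w_nonneg; lra).
  assert (E1' : W * y / z * (z / x) ^ S m = W * (z / y) ^ m * (y / x) ^ S m).
  { replace (z / x) with ((z / y) * (y / x)) by (field; lra). rewrite Rpow_mult_distr.
    simpl pow. field. lra. }
  rewrite E1'. pose proof (ratio_bound x m Hx). rewrite <- Hy in H0.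
  assert (0 <= (z / y) ^ m) by (apply pow_le; apply Rdiv_le_0_compat; lra).
  apply Rle_trans with (W * (z / y) ^ m * (1 + INR (S m) * 2 ^ S m / y)).
  { apply Rmult_le_compat_l; auto. apply Rmult_le_pos; auto. }
  simpl pow. right. field. lra.
Qed.

Lemma G_step z m : 0 < z -> G z (S m) <= G z m + INR (S m) * 2 ^ S m / z * G z (S m).
Proof.
  intros Hz. set (C := INR (S m) * 2 ^ S m / z).
  assert (HC : 0 <= C). { unfold C. apply Rdiv_le_0_compat; auto. apply Rmult_le_pos. apply pos_INR. apply pow_le; lra. }
  unfold G.
  assert (ex1 : ex_series (fun k => v z m (S k))) by (apply (ex_series_incr_1 (v z m)), ex_v; lra).
  assert (ex2 : ex_series (fun k => v z (S m) (S k))) by (apply (ex_series_incr_1 (v z (S m))), ex_v; lra).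
  assert (ex3 : ex_series (fun k => C * v z (S m) (S k))) by (apply (ex_series_scal_l C) in ex2; exact ex2).
  assert (Series (v z (S m)) <= Series (fun k => v z m (S k) + C * v z (S m) (S k))).
  { apply Series_le. intros n. split. apply v_nonneg; lra. apply v_step; auto.
    apply (ex_series_plus _ _ ex1 ex3). }
  rewrite Series_plus in H by auto. rewrite Series_scal_l in H.
  pose proof (Series_incr_1 _ (ex_v z m ltac:(lra))).
  pose proof (Series_incr_1 _ (ex_v z (S m) ltac:(lra))).
  pose proof (v_nonneg z m 0 ltac:(lra)). pose proof (v_nonneg z (S m) 0 ltac:(lra)).
  nra.
Qed.

Lemma G_nonneg z m : 0 <= z -> 0 <= G z m.
Proof.
  intros. unfold G. pose proof (Series_correct _ (ex_v z m H)). apply is_series_Reals in H0.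
  pose proof (isum_partial_le _ _ 0 H0 (fun n => v_nonneg z m n H)). simpl in H1.
  pose proof (v_nonneg z m 0 H). lra.
Qed.

Lemma NA m eps : 0 < eps -> exists Z, 0 < Z /\ forall z, Z < z -> G z m <= 1 + eps.
Proof.
  revert eps. induction m; intros eps Heps.
  - exists 1. split; [lra|]. intros. pose proof (G0 z ltac:(lra)). lra.
  - destruct (step_eps eps Heps) as (e & He & _ & H2).
    destruct (IHm e He) as (Z' & HZ' & HZ).
    set (C := INR (S m) * 2 ^ S m).
    assert (0 <= C) by (unfold C; apply Rmult_le_pos; [apply pos_INR|apply pow_le; lra]).
    exists (Rmax Z' (C / e)). split. { pose proof (Rmax_l Z' (C/e)). lra. }
    intros z Hz. pose proof (Rmax_l Z' (C/e)). pose proof (Rmax_r Z' (C/e)).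
    assert (0 < z) by lra.
    apply (H2 (C / z) (G z (S m)) (G z m)).
    + split. apply Rdiv_le_0_compat; lra.
      apply div_small; auto. lra.
    + apply G_step; auto.
    + apply HZ; lra.
Qed.

Lemma nat_above x : exists n : nat, x < INR n.
Proof.
  destruct (archimed (Rabs x)) as [H1 _].
  pose proof (Rabs_pos x). assert (0 < IZR (up (Rabs x))) by lra.
  apply lt_0_IZR in H0.
  exists (Z.to_nat (up (Rabs x))). rewrite INR_IZR_INZ, Z2Nat.id by lia.
  pose proof (Rle_abs x). lra.
Qed.

Lemma Fser b z l : 0 < z -> infinite_sum (sterm b z) l ->
  infinite_sum (fun k => w z k * Rpower (t z k) (- b)) (Fval b z l).
Proof.
  intros Hz H. apply is_series_Reals. apply is_series_Reals in H.
  apply (is_series_scal_l (exp (- z) * Rpower z (b + 1))) in H.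
  unfold Fval. eapply is_series_ext; [|exact H].
  intros k. unfold scal; simpl; unfold mult; simpl.
  unfold sterm, w, p, t, Rpower.
  pose proof (lt_0_INR (S k) ltac:(lia)). pose proof (fact_pos (S k)).
  rewrite ln_div by auto.
  replace (- b * (ln (INR (S k)) - ln z)) with (b * ln z + - (b * ln (INR (S k)))) by ring.
  replace ((b + 1) * ln z) with (b * ln z + ln z) by ring.
  rewrite !exp_plus, !exp_Ropp, exp_ln by auto. simpl pow.
  pose proof (exp_pos (b * ln (INR (S k)))). field. split; [lra|]. split; [lra|]. apply Rgt_not_eq, exp_pos.
Qed.

Lemma wt_sum z : 0 < z -> infinite_sum (fun k => w z k * t z k) 1.
Proof.
  intros. apply is_series_Reals. eapply is_series_ext; [|apply is_series_Reals, p_sum].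
  intros; simpl. symmetry; apply wt_p; auto.
Qed.

Lemma f_nonneg b z k : 0 < z -> 0 <= w z k * Rpower (t z k) (- b).
Proof. intros. apply Rmult_le_pos. apply w_nonneg; lra. left; apply exp_pos. Qed.

Lemma Rpower_negnat x m : 0 < x -> Rpower x (- INR m) = / x ^ m.
Proof. intros. rewrite Rpower_Ropp, Rpower_pow; auto. Qed.

Lemma v_eq z m k : 0 < z -> v z m k = w z k * / t z k ^ m.
Proof.
  intros. unfold v, t. rewrite <- pow_inv. f_equal. f_equal.
  pose proof (lt_0_INR (S k) ltac:(lia)). field. lra.
Qed.

Lemma partial_v_le z m N : 0 < z -> sum_f_R0 (v z m) N <= G z m.
Proof.
  intros. apply isum_partial_le. apply is_series_Reals, Series_correct, ex_v; lra.
  intros; apply v_nonneg; lra.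
Qed.

Lemma upper b m eps : (1 <= m)%nat -> Rabs b <= INR m -> 0 < eps ->
  exists Z, 0 < Z /\ forall z l, Z < z -> infinite_sum (sterm b z) l -> Fval b z l <= 1 + eps.
Proof.
  intros Hm Hb He. destruct (PA m eps He) as (Z1 & HZ1 & H1).
  destruct (NA m eps He) as (Z2 & HZ2 & H2).
  exists (Rmax Z1 Z2). pose proof (Rmax_l Z1 Z2). pose proof (Rmax_r Z1 Z2). split; [lra|].
  intros z l Hz Hl. assert (0 < z) by lra.
  pose proof (Fser b z l H3 Hl).
  apply (isum_le_bound _ _ _ H4). intros N.
  assert (HM : 0 < INR m) by (apply lt_0_INR; lia).
  assert (- INR m <= - b <= INR m) by (split; pose proof (Rle_abs b); pose proof (Rle_abs (-b)); rewrite Rabs_Ropp in *; lra).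
  assert (Hpt : forall k, w z k * Rpower (t z k) (- b) <=
      / (2 * INR m) * ((INR m + b) * v z m k + (- b + INR m) * (w z k * t z k ^ m))).
  { intros k. pose proof (t_pos z k H3).
    pose proof (Rpower_conv (t z k) (- b) (- INR m) (INR m) H6 ltac:(lra) H5).
    rewrite Rpower_negnat, Rpower_pow in H7 by auto. rewrite v_eq by auto.
    pose proof (w_nonneg z k ltac:(lra)).
    apply Rmult_le_compat_l with (r := w z k) in H7; auto.
    apply Rmult_le_reg_l with (2 * INR m). lra.
    rewrite <- (Rmult_assoc (2 * INR m) (/ (2 * INR m))), Rinv_r, Rmult_1_l by lra.
    replace (INR m - - INR m) with (2 * INR m) in H7 by ring.
    replace (INR m - - b) with (INR m + b) in H7 by ring.
    replace (- b - - INR m) with (- b + INR m) in H7 by ring. nra. }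
  eapply Rle_trans. apply sum_Rle. intros; apply Hpt.
  rewrite sum_scal_l, plus_sum, !sum_scal_l.
  pose proof (partial_v_le z m N H3). specialize (H1 z ltac:(lra) N). specialize (H2 z ltac:(lra)).
  unfold E in H1.
  apply Rmult_le_reg_l with (2 * INR m). lra.
  rewrite <- (Rmult_assoc (2 * INR m) (/ (2 * INR m))), Rinv_r, Rmult_1_l by lra.
  assert (0 <= INR m + b) by lra. assert (0 <= - b + INR m) by lra.
  nra.
Qed.

Lemma lower b eps : 0 < eps ->
  exists Z, 0 < Z /\ forall z l, Z < z -> infinite_sum (sterm b z) l -> 1 - eps <= Fval b z l.
Proof.
  intros He. destruct (Rle_dec (- b) 1) as [Ha|Ha].
  - assert (He' : 0 < eps / (2 + b)) by (apply Rdiv_lt_0_compat; lra).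
    destruct (PA 2 _ He') as (Z & HZ & H1). exists Z. split; auto.
    intros z l Hz Hl. assert (0 < z) by lra.
    pose proof (Fser b z l H Hl).
    assert (Hpt : forall k, (2 + b) * (w z k * t z k) + (- b - 1) * (w z k * t z k ^ 2) <=
                           w z k * Rpower (t z k) (- b)).
    { intros k. pose proof (t_pos z k H). pose proof (Rpower_low (t z k) (- b) H2).
      pose proof (ln_le_xm1 (t z k) H2). pose proof (w_nonneg z k ltac:(lra)).
      assert ((-b - 1) * (t z k - 1) <= (-b - 1) * ln (t z k)) by (apply Rmult_le_compat_neg_l; lra).
      assert (t z k * (1 + (-b - 1) * (t z k - 1)) <= t z k * (1 + (-b - 1) * ln (t z k))) by (apply Rmult_le_compat_l; lra).
      assert (w z k * (t z k * (1 + (-b - 1) * (t z k - 1))) <= w z k * Rpower (t z k) (- b)) by (apply Rmult_le_compat_l; lra).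
      simpl. nra. }
    assert (forall N, (2 + b) * sum_f_R0 (fun k => w z k * t z k) N + (- b - 1) * (1 + eps / (2 + b)) <= Fval b z l).
    { intros N. specialize (H1 z Hz N). unfold E in H1.
      pose proof (isum_partial_le _ _ N H0 (fun k => f_nonneg b z k H)).
      eapply Rle_trans; [|exact H2].
      eapply Rle_trans; [|apply sum_Rle; intros; apply Hpt].
      rewrite plus_sum, !sum_scal_l. apply Rplus_le_compat_l.
      apply Rmult_le_compat_neg_l; lra. }
    pose proof (isum_ge_lim _ _ _ (2 + b) _ (wt_sum z H) ltac:(lra) H2).
    assert ((- b - 1) * (1 + eps / (2 + b)) = (-b - 1) - (1 + b) / (2 + b) * eps) by (field; lra).
    assert ((1 + b) / (2 + b) <= 1). { apply Rmult_le_reg_r with (2 + b). lra. field_simplify; lra. }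
    assert (0 <= (1 + b) / (2 + b)) by (apply Rdiv_le_0_compat; lra).
    nra.
  - exists 1. split; [lra|]. intros z l Hz Hl. assert (0 < z) by lra.
    pose proof (Fser b z l H Hl).
    assert (Hpt : forall k, (- b) * (w z k * t z k) + (b + 1) * (w z k * t z k ^ 0) <=
                           w z k * Rpower (t z k) (- b)).
    { intros k. pose proof (t_pos z k H). pose proof (Rpower_low (t z k) (- b) H1).
      pose proof (ln_ge (t z k) H1). pose proof (w_nonneg z k ltac:(lra)).
      assert ((-b - 1) * (1 - / t z k) <= (-b - 1) * ln (t z k)) by (apply Rmult_le_compat_l; lra).
      assert (t z k * (1 + (-b - 1) * (1 - / t z k)) <= t z k * (1 + (-b - 1) * ln (t z k))) by (apply Rmult_le_compat_l; lra).
      replace (t z k * (1 + (-b - 1) * (1 - / t z k))) with (- b * t z k + (b + 1)) in H6 by (field; lra).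
      assert (w z k * (- b * t z k + (b + 1)) <= w z k * Rpower (t z k) (- b)) by (apply Rmult_le_compat_l; lra).
      simpl. nra. }
    assert (forall N, (- b) * sum_f_R0 (fun k => w z k * t z k) N + (b + 1) <= Fval b z l).
    { intros N. pose proof (E0 z N H). unfold E in H1.
      pose proof (isum_partial_le _ _ N H0 (fun k => f_nonneg b z k H)).
      eapply Rle_trans; [|exact H2].
      eapply Rle_trans; [|apply sum_Rle; intros; apply Hpt].
      rewrite plus_sum, !sum_scal_l. apply Rplus_le_compat_l.
      replace (b + 1) with ((b + 1) * 1) at 1 by ring. apply Rmult_le_compat_neg_l; lra. }
    pose proof (isum_ge_lim _ _ _ (- b) _ (wt_sum z H) ltac:(lra) H1). lra.
Qed.

Lemma exp_INR n : exp (INR n) = exp 1 ^ n.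
Proof.
  induction n. simpl. apply exp_0. rewrite S_INR, exp_plus, IHn. simpl. ring.
Qed.

Lemma exp_series x : infinite_sum (fun i => / INR (fact i) * x ^ i) (exp x).
Proof. exact (proj2_sig (exist_exp x)). Qed.

Lemma pow_fact_exp x M : 0 <= x -> x ^ M <= INR (fact M) * exp x.
Proof.
  intros. assert (Hn : forall i, 0 <= / INR (fact i) * x ^ i).
  { intros. apply Rmult_le_pos. left; apply Rinv_0_lt_compat, fact_pos. apply pow_le; auto. }
  pose proof (term_le_sum _ M Hn). pose proof (isum_partial_le _ _ M (exp_series x) Hn).
  pose proof (fact_pos M).
  replace (x ^ M) with (INR (fact M) * (/ INR (fact M) * x ^ M)) by (field; lra).
  apply Rmult_le_compat_l; lra.
Qed.

Lemma part1 b z : exists l, infinite_sum (sterm b z) l.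
Proof.
  destruct (nat_above (- b)) as [M HM].
  set (e := exp 1). assert (He : 0 < e) by apply exp_pos.
  set (K := INR (fact M) * e).
  assert (ex_series (sterm b z)).
  { apply (@ex_series_le R_AbsRing R_CompleteNormedModule _ (fun n => K * (/ INR (fact n) * (e * Rabs z) ^ n))).
    - intros n. change (norm (sterm b z n)) with (Rabs (sterm b z n)).
      unfold sterm. pose proof (lt_0_INR (S n) ltac:(lia)). pose proof (fact_pos (S n)).
      pose proof (fact_pos n). pose proof (fact_pos M).
      assert (HR : 0 < Rpower (INR (S n)) b) by apply exp_pos.
      rewrite Rabs_div by (apply Rgt_not_eq; apply Rmult_lt_0_compat; lra). rewrite Rabs_mult, (Rabs_right (INR (fact (S n)))), (Rabs_right (Rpower _ _)), <- RPow_abs by lra.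
      assert (H3 : / Rpower (INR (S n)) b <= INR (S n) ^ M).
      { rewrite <- Rpower_Ropp, <- Rpower_pow by lra. apply Rle_Rpower. rewrite S_INR; pose proof (pos_INR n); lra. lra. }
      pose proof (pow_fact_exp (INR (S n)) M ltac:(lra)).
      rewrite exp_INR in H4. unfold K.
      assert (/ INR (fact (S n)) <= / INR (fact n)).
      { apply Rinv_le_contravar; auto. rewrite fact_simpl, mult_INR. rewrite S_INR. pose proof (pos_INR n). nra. }
      rewrite Rpow_mult_distr. change (exp 1 ^ S n) with (exp 1 * exp 1 ^ n) in H4. fold e in H4.
      assert (0 <= Rabs z ^ n) by (apply pow_le, Rabs_pos).
      assert (0 <= e ^ n) by (apply pow_le; lra).
      unfold Rdiv. rewrite Rinv_mult.
      assert (0 <= / INR (fact (S n))) by (left; apply Rinv_0_lt_compat; lra).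
      apply Rle_trans with (Rabs z ^ n * (/ INR (fact (S n)) * (INR (fact M) * (e * e ^ n)))).
      { apply Rmult_le_compat_l; auto. apply Rmult_le_compat_l; auto. lra. }
      apply Rle_trans with (Rabs z ^ n * (/ INR (fact n) * (INR (fact M) * (e * e ^ n)))).
      { apply Rmult_le_compat_l; auto. apply Rmult_le_compat_r; auto.
        apply Rmult_le_pos; [lra|]. apply Rmult_le_pos; lra. }
      right. unfold e. ring.
    - apply (@ex_series_scal_l R_AbsRing R_NormedModule K (fun n => / INR (fact n) * (e * Rabs z) ^ n)). exists (exp (e * Rabs z)). apply is_series_Reals, exp_series. }
  exists (Series (sterm b z)). apply is_series_Reals, Series_correct; auto.
Qed.

Lemma G_crude z m : 0 <= z -> G z m <= z ^ m.
Proof.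
  intros Hz. unfold G. apply Rle_trans with (Series (fun k => z ^ m * w z k)).
  - apply Series_le.
    + intros n. split. apply v_nonneg; auto. unfold v.
      rewrite Rmult_comm. apply Rmult_le_compat_r. apply w_nonneg; auto.
      apply pow_incr. split. apply Rdiv_le_0_compat; auto. apply lt_0_INR; lia.
      unfold Rdiv. rewrite <- (Rmult_1_r z) at 2. apply Rmult_le_compat_l; auto.
      rewrite <- Rinv_1. apply Rinv_le_contravar. lra. rewrite S_INR. pose proof (pos_INR n). lra.
    + apply (ex_series_scal_l (z ^ m) (w z)). apply ex_w.
  - rewrite Series_scal_l. pose proof (Series_w z Hz). pose proof (pow_le z m Hz).
    pose proof (Rmult_le_compat_l _ _ _ H0 H). lra.
Qed.

Lemma part3 b : b >= -1 -> exists M, forall z l, 0 < z -> infinite_sum (sterm b z) l -> Fval b z l <= M.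
Proof.
  intros Hb. destruct (Rle_dec b 0) as [Hb0|Hb0].
  - exists 1. intros z l Hz Hl. pose proof (Fser b z l Hz Hl).
    apply (isum_le_bound _ _ _ H). intros N.
    apply Rle_trans with (sum_f_R0 (fun k => (1 + b) * (w z k * t z k ^ 0) + (- b) * (w z k * t z k ^ 1)) N).
    + apply sum_Rle. intros k _. pose proof (t_pos z k Hz).
      pose proof (Rpower_conv (t z k) (- b) 0 1 H0 ltac:(lra) ltac:(lra)).
      rewrite Rpower_O, Rpower_1 in H1 by auto. pose proof (w_nonneg z k ltac:(lra)).
      apply Rmult_le_compat_l with (r := w z k) in H1; auto. simpl. nra.
    + rewrite plus_sum, !sum_scal_l. pose proof (E0 z N Hz). pose proof (E1 z N Hz).
      unfold E in *. nra.
  - destruct (nat_above b) as [m0 Hm0]. set (m := S m0).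
    assert (Hm : b < INR m) by (unfold m; rewrite S_INR; pose proof (pos_INR m0); lra).
    assert (Hm1 : 0 < INR m) by (unfold m; apply lt_0_INR; lia).
    destruct (NA m 1 ltac:(lra)) as (Z & HZ & HG).
    set (K := 2 + Z ^ m).
    assert (HK : forall z, 0 < z -> G z m <= K).
    { intros z Hz. unfold K. pose proof (pow_le Z m ltac:(lra)). destruct (Rlt_dec Z z).
      - pose proof (HG z r). lra.
      - pose proof (G_crude z m ltac:(lra)). assert (z ^ m <= Z ^ m) by (apply pow_incr; lra). lra. }
    exists (/ INR m * (b * K + (INR m - b))). intros z l Hz Hl.
    pose proof (Fser b z l Hz Hl).
    apply (isum_le_bound _ _ _ H). intros N.
    apply Rle_trans with (sum_f_R0 (fun k => / INR m * (b * v z m k + (INR m - b) * (w z k * t z k ^ 0))) N).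
    + apply sum_Rle. intros k _. pose proof (t_pos z k Hz).
      pose proof (Rpower_conv (t z k) (- b) (- INR m) 0 H0 ltac:(lra) ltac:(lra)).
      rewrite Rpower_O, Rpower_negnat in H1 by auto. rewrite v_eq by auto.
      pose proof (w_nonneg z k ltac:(lra)).
      apply Rmult_le_compat_l with (r := w z k) in H1; auto.
      apply Rmult_le_reg_l with (INR m); auto.
      rewrite <- (Rmult_assoc (INR m) (/ INR m)), Rinv_r, Rmult_1_l by lra.
      replace (0 - - INR m) with (INR m) in H1 by ring.
      replace (0 - - b) with b in H1 by ring.
      replace (- b - - INR m) with (INR m - b) in H1 by ring. rewrite pow_O. nra.
    + rewrite sum_scal_l, plus_sum, !sum_scal_l. pose proof (E0 z N Hz). unfold E in H0.
      pose proof (partial_v_le z m N Hz). pose proof (HK z Hz).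
      apply Rmult_le_compat_l. left; apply Rinv_0_lt_compat; auto.
      assert (b * sum_f_R0 (v z m) N <= b * K) by (apply Rmult_le_compat_l; lra).
      assert ((INR m - b) * sum_f_R0 (fun k => w z k * t z k ^ 0) N <= (INR m - b) * 1) by (apply Rmult_le_compat_l; lra).
      lra.
Qed.

Theorem mainTheorem11 :
  (forall b z : R, exists l : R, infinite_sum (sterm b z) l) /\
  (forall b : R,
     forall eps : R, eps > 0 ->
     exists Z : R, forall z l : R, z > Z ->
       infinite_sum (sterm b z) l -> Rabs (Fval b z l - 1) < eps) /\
  (forall b : R, b >= -1 ->
     exists M : R, forall z l : R, 0 < z ->
       infinite_sum (sterm b z) l -> Fval b z l <= M).
Proof.
  split; [exact part1|split; [|exact part3]].
  intros b eps Heps.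
  destruct (nat_above (Rabs b)) as [m0 Hm0]. set (m := S m0).
  assert (Hm : Rabs b <= INR m) by (unfold m; rewrite S_INR; lra).
  destruct (upper b m (eps / 2) ltac:(unfold m; lia) Hm ltac:(lra)) as (Z1 & HZ1 & H1).
  destruct (lower b (eps / 2) ltac:(lra)) as (Z2 & HZ2 & H2).
  exists (Rmax Z1 Z2). intros z l Hz Hl.
  pose proof (Rmax_l Z1 Z2). pose proof (Rmax_r Z1 Z2).
  specialize (H1 z l ltac:(lra) Hl). specialize (H2 z l ltac:(lra) Hl).
  apply Rabs_def1; lra.
Qed.
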